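(* Let $S\subseteq\mathbb Z$ be such that every translate $S+m$ ($m\in\mathbb Z$) is a set of recurrence. If $A\subseteq\mathbb Z$ has $d^*(A)>0$ and $n\in\mathbb Z$, then $S\cap(n+A-A)$ is infinite.
   Context: $S\subseteq\mathbb Z$ is a set of recurrence if for every measure preserving system $(X,\mu,T)$ (probability space, invertible measure preserving $T$) and every measurable $D$ with $\mu(D)>0$ there exists $k\in S$ with $\mu(D\cap T^kD)>0$. $A-A=\{a-b:a,b\in A\}$ and $d^*(A)=\lim_{N\to\infty}\sup_{M\in\mathbb Z}\frac{|A\cap[M,M+N-1]|}{N}$ is the upper Banach density. *)

(* Defs.v *)
From HB Require Import structures.
From mathcomp Require Import all_boot all_order all_algebra.
From mathcomp Require Import all_classical all_reals all_analysis.
From mathcomp Require Import Rstruct Rstruct_topology.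
Set Implicit Arguments. Unset Strict Implicit. Unset Printing Implicit Defensive.
Import Order.TTheory GRing.Theory Num.Theory.
Local Open Scope classical_set_scope.
Local Open Scope ring_scope.

Definition iter_int {X : Type} (T Tinv : X -> X) (k : int) : X -> X :=
  match k with
  | Posz n => iter n T
  | Negz n => iter n.+1 Tinv
  end.

Definition mps {d : measure_display} {X : measurableType d}
  (P : probability X Rdefinitions.R) (T Tinv : X -> X) : Prop :=
  [/\ measurable_fun setT T, measurable_fun setT Tinv,
      cancel T Tinv, cancel Tinv T &
      forall A, measurable A -> P (T @^-1` A) = P A].

Definition set_of_recurrence (S : set int) : Prop :=
  forall (d : measure_display) (X : measurableType d)
    (P : probability X Rdefinitions.R) (T Tinv : X -> X),
    mps P T Tinv ->
    forall D : set X, measurable D -> (0 < P D)%E ->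
      exists2 k, S k & (0 < P (D `&` (iter_int T Tinv k @` D)))%E.

Definition banach_window (A : set int) (N : nat) : Rdefinitions.R :=
  sup [set (\sum_(i < N) (\1_A (M + (i : nat)%:Z) : Rdefinitions.R)) / N%:R
       | M in [set: int]].

Definition upper_banach_density (A : set int) : Rdefinitions.R :=
  lim (banach_window A @ \oo).

Definition translate (S : set int) (m : int) : set int := [set s + m | s in S].

Definition shifted_diff (n : int) (A : set int) : set int :=
  [set n + (a - b) | a in A & b in A].

(* Main.v *)
Require Import Defs.
From HB Require Import structures.
From mathcomp Require Import all_boot all_order all_algebra.
From mathcomp Require Import all_classical all_reals all_analysis.
From mathcomp Require Import Rstruct Rstruct_topology.
From mathcomp Require Import ring lra zify.
Import Order.TTheory GRing.Theory Num.Theory.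
Local Open Scope classical_set_scope.
Local Open Scope ring_scope.
Set Implicit Arguments.
Unset Strict Implicit.
Unset Printing Implicit Defensive.

Notation RR := Rdefinitions.R.

Definition Uf_sig := cid (ultraFilterLemma (eventually_filter : ProperFilter (\oo : set_system nat))).
Definition Uf : set_system nat := proj1_sig Uf_sig.
Lemma Uf_ultra : UltraFilter Uf. Proof. exact: (proj1 (proj2_sig Uf_sig)). Qed.
Lemma Uf_oo : (\oo : set_system nat) `<=` Uf. Proof. exact: (proj2 (proj2_sig Uf_sig)). Qed.
Instance Uf_proper : ProperFilter Uf. Proof. by case: Uf_ultra. Qed.

Definition ulim (f : nat -> RR) : RR := lim (f @ Uf).

Lemma ulimP (f : nat -> RR) : (forall n, 0 <= f n <= 1) -> f @ Uf --> ulim f.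
Proof.
move=> f01.
have cpt : compact (`[0, 1]%classic : set RR) by exact: segment_compact.
have FA : (f @ Uf) (`[0, 1]%classic : set RR).
  by apply: nearW => n /=; rewrite in_itv /=; exact: f01.
have [p [_ clp]] := cpt (f @ Uf) (fmap_proper_filter f Uf_proper) FA.
have fp : f @ Uf --> p.
  move=> V /= pV.
  case: (in_ultra_setVsetC (f @^-1` V) Uf_ultra) => // nV.
  have : (f @ Uf) (~` V) by [].
  move=> H; have := clp _ _ H pV; case=> x [? ?]; by [].
exact: (cvgP _ fp).
Qed.

Lemma ulimE (f : nat -> RR) l : f @ Uf --> l -> ulim f = l.
Proof.
move=> fl; have fl' : f @ Uf --> ulim f := cvgP _ fl.
exact: (@cvg_unique _ (@Rhausdorff RR) (f @ Uf) (fmap_proper_filter f Uf_proper) _ _ fl' fl).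
Qed.

Lemma ulim_ge (f : nat -> RR) c : (forall n, 0 <= f n <= 1) ->
  (\forall n \near Uf, c <= f n) -> c <= ulim f.
Proof.
move=> f01 H; apply: (closed_cvg (fun x => c <= x)) (ulimP f01) => //.
Qed.

Lemma ulim_le (f : nat -> RR) c : (forall n, 0 <= f n <= 1) ->
  (\forall n \near Uf, f n <= c) -> ulim f <= c.
Proof.
move=> f01 H; apply: (closed_cvg (fun x => x <= c)) (ulimP f01) => //.
Qed.

Lemma ulimD (f g : nat -> RR) : (forall n, 0 <= f n <= 1) -> (forall n, 0 <= g n <= 1) ->
  ulim (f \+ g) = ulim f + ulim g.
Proof.
move=> f01 g01; apply: ulimE.
have h := @cvgD _ RR^o _ _ _ f g _ _ (ulimP f01) (ulimP g01).
exact: h.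
Qed.

Lemma ulim_eq0 (f g : nat -> RR) : (forall n, 0 <= f n <= 1) -> (forall n, 0 <= g n <= 1) ->
  (f \- g) @ \oo --> (0 : RR) -> ulim f = ulim g.
Proof.
move=> f01 g01 h.
have h1 : (f \- g) @ Uf --> ulim f - ulim g := @cvgB _ RR^o _ _ _ f g _ _ (ulimP f01) (ulimP g01).
have h2 : (f \- g) @ Uf --> (0:RR) := cvg_trans (fun A (hA : ((f \- g) @ \oo) A) => Uf_oo hA) h.
by apply/eqP; rewrite -subr_eq0; apply/eqP; exact: (@cvg_unique _ (@Rhausdorff RR) _ (fmap_proper_filter _ Uf_proper) _ _ (h1 _) h2).
Qed.

Section Lam.
Variable Mw : nat -> int.

Definition avg (B : set int) (N : nat) : RR :=
  (\sum_(i < N) (\1_B (Mw N + (i : nat)%:Z) : RR)) / N%:R.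

Lemma indic01 (B : set int) x : 0 <= (\1_B x : RR) <= 1.
Proof. by rewrite indicE; case: (x \in B); rewrite ?lexx ?ler01. Qed.

Lemma sum_indic_le (B : set int) (M : int) N :
  0 <= \sum_(i < N) (\1_B (M + (i : nat)%:Z) : RR) <= N%:R.
Proof.
apply/andP; split; first by apply: sumr_ge0 => i _; case/andP: (indic01 B (M + i)).
apply: (le_trans (y := \sum_(i < N) (1 : RR))).
  by apply: ler_sum => i _; case/andP: (indic01 B (M + i)).
by rewrite sumr_const card_ord.
Qed.

Lemma avg01 B N : 0 <= avg B N <= 1.
Proof.
rewrite /avg; case: N => [|N]; first by rewrite big_ord0 mul0r lexx ler01.
have := sum_indic_le B (Mw N.+1) N.+1 => /andP [h0 h1].
apply/andP; split; first by apply: divr_ge0.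
by rewrite ler_pdivrMr ?ltr0Sn // mul1r.
Qed.

Lemma avgU B B' N : B `&` B' = set0 -> avg (B `|` B') N = avg B N + avg B' N.
Proof.
move=> dis; rewrite /avg -mulrDl -big_split /=; congr (_ * _).
apply: eq_bigr => i _; rewrite !indicE.
have [hB|hB] := boolP (Mw N + i \in B); have [hB'|hB'] := boolP (Mw N + i \in B').
- exfalso; move: hB hB'; rewrite !inE => hB hB'.
  by have : (B `&` B') (Mw N + i) by []; rewrite dis.
- by rewrite in_setU hB /= addr0.
- by rewrite in_setU hB' orbT add0r.
- by rewrite in_setU (negbTE hB) (negbTE hB') addr0.
Qed.

Lemma avgT N : (0 < N)%N -> avg setT N = 1.
Proof.
move=> N0; rewrite /avg (eq_bigr (fun _ => 1)); last by move=> i _; rewrite indicE in_setT.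
by rewrite sumr_const card_ord divff // pnatr_eq0 -lt0n.
Qed.

Definition lam (B : set int) : RR := ulim (avg B).

Lemma lam01 B : 0 <= lam B <= 1.
Proof.
apply/andP; split.
  by apply: ulim_ge => //; [exact: avg01| apply: nearW => N; case/andP: (avg01 B N)].
by apply: ulim_le => //; [exact: avg01| apply: nearW => N; case/andP: (avg01 B N)].
Qed.

Lemma lam_ge0 B : 0 <= lam B. Proof. by case/andP: (lam01 B). Qed.

Lemma lamU B B' : B `&` B' = set0 -> lam (B `|` B') = lam B + lam B'.
Proof.
move=> dis; rewrite /lam -ulimD; [|exact: avg01|exact: avg01].
congr ulim; apply: funext => N; exact: avgU.
Qed.

Lemma lamT : lam setT = 1.
Proof.
apply/eqP; rewrite eq_le; apply/andP; split; first by case/andP: (lam01 setT).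
apply: ulim_ge; first exact: avg01.
apply: Uf_oo; exists 1%N => // N /= hN; by rewrite avgT.
Qed.

Lemma lam0 : lam set0 = 0.
Proof.
have := lamU (B := set0) (B' := set0) (setI0 _); rewrite setU0.
move=> h; have : lam set0 + lam set0 = lam set0 + 0 by rewrite addr0 -h.
by move/addrI.
Qed.

Lemma sum_shift1 (g : nat -> RR) N :
  \sum_(i < N) g i.+1 = \sum_(i < N) g i + g N - g 0%N.
Proof.
have h1 := big_ord_recl N (fun i : 'I_N.+1 => g i).
have h2 := big_ord_recr N (fun i : 'I_N.+1 => g i).
rewrite /= in h1 h2.
have : g 0%N + \sum_(i < N) g i.+1 = \sum_(i < N) g i + g N.
  by rewrite -h1 h2.
by move=> h; rewrite -h addrC addKr.
Qed.

Lemma lam_shift1 B : lam [set j | B (j + 1)] = lam B.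
Proof.
apply: ulim_eq0; [exact: avg01|exact: avg01|].
apply/(@cvgr0Pnorm_le _ RR^o) => eps eps0.
pose n0 := Num.Def.archi_bound (eps^-1).
exists n0.+1 => // N /= hN.
have N0 : (0 < N)%N by apply: leq_trans hN.
rewrite /avg -mulrBl.
pose g i := (\1_B (Mw N + i%:Z) : RR).
have -> : \sum_(i < N) (\1_[set j | B (j + 1)] (Mw N + (i : nat)%:Z) : RR) = \sum_(i < N) g i.+1.
  apply: eq_bigr => i _; rewrite /g !indicE; congr (_%:R).
  rewrite -addn1 PoszD addrA.
  by congr nat_of_bool; apply/idP/idP; rewrite !in_setE.
have hg : forall i, 0 <= g i <= 1 by move=> i; exact: indic01.
rewrite sum_shift1.
have -> : \sum_(i < N) g i + g N - g 0%N - \sum_(i < N) g i = g N - g 0%N by ring.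
rewrite normrM.
have h1 : `|g N - g 0%N| <= 1.
  have := hg N; have := hg 0%N => /andP[? ?] /andP[? ?].
  rewrite ler_norml; apply/andP; split; lra.
have h2 : `|N%:R^-1| <= eps.
  have Npos : (0 : RR) < N%:R by rewrite ltr0n.
  rewrite ger0_norm ?invr_ge0 ?ler0n //.
  have hb : eps^-1 < n0%:R by apply: archi_boundP; rewrite invr_ge0 ltW.
  have hN' : (n0%:R : RR) <= N%:R by rewrite ler_nat; apply: ltnW.
  rewrite -[N%:R^-1]mul1r ler_pdivrMr //.
  apply: (le_trans (y := eps * eps^-1)); first by rewrite mulfV ?gt_eqF.
  rewrite ler_pM2l //; apply/ltW; exact: lt_le_trans hb hN'.
rewrite -[eps]mul1r; apply: ler_pM => //.
Qed.

Lemma lam_shiftn B (n : nat) : lam [set j | B (j + n%:Z)] = lam B.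
Proof.
elim: n B => [|n IH] B.
  by congr lam; apply: funext => j /=; rewrite addr0.
rewrite -(IH B) -[RHS]lam_shift1; congr lam; apply: funext => j /=.
by congr B; rewrite -addn1 PoszD; ring.
Qed.

Lemma lam_shift B (c : int) : lam [set j | B (j + c)] = lam B.
Proof.
case: c => n; first exact: lam_shiftn.
rewrite NegzE.
have := lam_shiftn [set j | B (j - n.+1%:Z)] n.+1.
have -> : [set j | [set j | B (j - n.+1%:Z)] (j + n.+1%:Z)] = B.
  by apply: funext => j /=; rewrite addrK.
by move=> ->.
Qed.

Lemma lam_le B B' : B `<=` B' -> lam B <= lam B'.
Proof.
move=> sub; rewrite -(setDUK sub) lamU; last exact: setDIK.
by rewrite lerDl lam_ge0.
Qed.

Lemma lam_sub B B' : lam (B `|` B') <= lam B + lam B'.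
Proof.
have -> : B `|` B' = B `|` (B' `\` B) by rewrite setUDr setDv setD0.
rewrite lamU; last exact: setDIK.
by rewrite lerD2l; apply: lam_le => j [].
Qed.

Lemma lam_bigU_le (F : nat -> set int) k :
  lam (\big[setU/set0]_(i < k) F i) <= \sum_(i < k) lam (F i).
Proof.
elim: k => [|k IH]; first by rewrite !big_ord0 lam0.
rewrite !big_ord_recr /=; apply: le_trans (lam_sub _ _) _.
by rewrite lerD2r.
Qed.

Lemma lam_bigU (F : nat -> set int) k :
  (forall i j, (j < i)%N -> F i `&` F j = set0) ->
  lam (\big[setU/set0]_(i < k) F i) = \sum_(i < k) lam (F i).
Proof.
move=> dis; elim: k => [|k IH]; first by rewrite !big_ord0 lam0.
rewrite !big_ord_recr /= lamU ?IH //.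
rewrite setIC -bigcup_mkord; apply/seteqP; split => // x [Fkx [i /= hi Fix]].
by have : (F k `&` F i) x by []; rewrite dis.
Qed.

Lemma lamD B U : lam (B `\` U) = lam B - lam (B `&` U).
Proof.
have := lamU (B := B `&` U) (B' := B `\` U).
rewrite setUIDK => ->; first by ring.
by apply/seteqP; split => // x [[_ Ux] [_ nUx]].
Qed.

Lemma lam_pack (F : nat -> set int) (a : RR) k :
  (forall i, (i < k)%N -> lam (F i) = a) ->
  (forall i j, (j < i)%N -> (i < k)%N -> lam (F i `&` F j) = 0) ->
  k%:R * a <= lam (\big[setU/set0]_(i < k) F i).
Proof.
elim: k => [|k IH] Fa Fij; first by rewrite mul0r big_ord0 lam0.
rewrite big_ord_recr /=.
set U := \big[setU/set0]_(i < k) F i.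
have -> : U `|` F k = U `|` (F k `\` U) by rewrite setUDr setDv setD0.
rewrite lamU; last first.
  by apply/seteqP; split => // x [Ux [_ nUx]].
rewrite lamD.
have h0 : lam (F k `&` U) <= 0.
  apply: (le_trans (y := lam (\big[setU/set0]_(j < k) (F k `&` F j)))).
    apply: lam_le => x [Fkx]; rewrite /U -!bigcup_mkord => -[j /= hj Fjx].
    by rewrite -(bigcup_mkord k (fun j => F k `&` F j)); exists j.
  apply: (le_trans (lam_bigU_le (fun j => F k `&` F j) k)).
  rewrite (eq_bigr (fun=> 0)) ?big1 // => j _; apply: Fij => //.
have hU := IH (fun i hi => Fa i (ltnW hi)) (fun i j hj hi => Fij i j hj (ltnW hi)).
rewrite Fa // -natr1 mulrDl mul1r.
have := lam_ge0 (F k `&` U); lra.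
Qed.

Lemma lam_recur (A : set int) (Bd : nat) : 0 < lam A ->
  exists t : int, (Bd < `|t|)%N /\ 0 < lam (A `&` [set j | A (j - t)]).
Proof.
move=> A0.
apply: contrapT => /forallNP H.
have H' : forall t : int, (Bd < `|t|)%N -> lam (A `&` [set j | A (j - t)]) = 0.
  move=> t ht; have := H t; move/not_andP => [//|].
  move/negP; rewrite -leNgt => h; apply/eqP; rewrite eq_le h lam_ge0.
  by [].
pose m := Num.Def.archi_bound (lam A)^-1.
pose c : int := (Bd.+1)%:Z.
pose F (i : nat) := [set j | A (j + c * i%:Z)].
have hp := lam_pack (F := F) (a := lam A) (k := m).
have : m%:R * lam A <= lam (\big[setU/set0]_(i < m) F i).
  apply: hp.
  - by move=> i _; rewrite /F lam_shift.
  - move=> i j hji _.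
    have -> : F i `&` F j = [set x | (A `&` [set y | A (y - (- (c * (i%:Z - j%:Z))))]) (x + c * j%:Z)].
      apply: funext => x; apply: propext; rewrite /F /=; split => -[h1 h2]; split.
      + by [].
      + by move: h1; congr A; ring.
      + by move: h2; congr A; ring.
      + by [].
    rewrite lam_shift H' //.
    rewrite /c abszN abszM absz_nat subzn ?absz_nat; last exact: ltnW.
    by apply: leq_pmulr; rewrite subn_gt0.
have hm : (lam A)^-1 < m%:R by apply: archi_boundP; rewrite invr_ge0 ltW.
have := lam01 (\big[setU/set0]_(i < m) F i) => /andP [_ h1].
move=> h2.
have : 1 < m%:R * lam A.
  by rewrite -(ltr_pdivrMr _ _ A0) div1r.
lra.
Qed.

Lemma lam_residue X (q : nat) : (0 < q)%N -> 0 < lam X ->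
  exists r : nat, (r < q)%N /\ 0 < lam (X `&` [set j | (j %% q%:Z)%Z = r%:Z]).
Proof.
move=> q0 X0; apply: contrapT => /forallNP H.
have H' : forall r : nat, (r < q)%N -> lam (X `&` [set j | (j %% q%:Z)%Z = r%:Z]) <= 0.
  move=> r hr; have := H r; move/not_andP => [//|].
  by move/negP; rewrite -leNgt.
have hX : X = \big[setU/set0]_(r < q) (X `&` [set j | (j %% q%:Z)%Z = r%:Z]).
  rewrite -(bigcup_mkord q (fun r => X `&` [set j | (j %% q%:Z)%Z = r%:Z])).
  apply/seteqP; split => [j Xj|j [r _ [Xj _]] //].
  have m0 : (0 <= (j %% q%:Z)%Z) by apply: modz_ge0; rewrite eqz_nat -lt0n.
  have mq : ((j %% q%:Z)%Z < q%:Z) by apply: ltz_pmod; rewrite ltz_nat.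
  exists `|(j %% q%:Z)%Z|%N => /=.
    by rewrite -ltz_nat gez0_abs.
  by split => //; rewrite gez0_abs.
have : lam X <= 0.
  rewrite {1}hX (@lam_bigU (fun r => X `&` [set j | (j %% q%:Z)%Z = r%:Z]) q).
    apply: (le_trans (y := \sum_(r < q) (0:RR))); first by apply: ler_sum => r _; apply: H'.
    by rewrite big1.
  move=> i j ji; apply/seteqP; split => // x [[_ hi] [_ hj]].
  have : i%:Z = j%:Z by rewrite -hi -hj.
  by move/eqP; rewrite eqz_nat => /eqP eij; move: ji; rewrite eij ltnn.
by rewrite leNgt X0.
Qed.

End Lam.

Definition Xc := int -> bool.
HB.instance Definition _ := Pointed.on Xc.

Definition agree (N : nat) (x x' : Xc) := forall i : int, (`|i| <= N)%N -> x i = x' i.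
Definition findep (B : set Xc) := exists N : nat, forall x x', agree N x x' -> B x -> B x'.

Lemma agree_sym N x x' : agree N x x' -> agree N x' x.
Proof. by move=> h i hi; rewrite h. Qed.

Lemma agree_le N M x x' : (N <= M)%N -> agree M x x' -> agree N x x'.
Proof. by move=> NM h i hi; apply: h; apply: leq_trans hi NM. Qed.

Lemma abs_succ_cases (i : int) N : (`|i| <= N.+1)%N ->
  (`|i| <= N)%N \/ i = N.+1%:Z \/ i = - N.+1%:Z.
Proof.
case: i => n /=.
  rewrite leq_eqVlt => /orP [/eqP ->|]; [by right; left|by rewrite ltnS; left].
rewrite NegzE /= leq_eqVlt => /orP [/eqP [->]|]; [by right; right|by rewrite ltnS; left].
Qed.

Lemma window_Uf (xs : nat -> Xc) (z : Xc) :
  (forall i, Uf [set n | xs n i = z i]) -> forall N, Uf [set n | agree N (xs n) z].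
Proof.
move=> H; elim=> [|N IH].
  apply: filterS (H 0) => n h i; rewrite leqn0 => /eqP hi.
  by have -> : i = 0 by apply/eqP; rewrite -absz_eq0 hi.
apply: filterS (filterI (filterI IH (H N.+1%:Z)) (H (- N.+1%:Z))) => n [[h1 h2] h3] i /abs_succ_cases [hi|[->|->]] //.
exact: h1.
Qed.

Lemma Uf_pointwise (xs : nat -> Xc) :
  forall i, Uf [set n | xs n i = `[< Uf [set n | xs n i] >] ].
Proof.
move=> i; case: (pselect (Uf [set n | xs n i])) => h.
  by rewrite asboolT //; apply: filterS h.
rewrite asboolF //.
case: (in_ultra_setVsetC [set n | xs n i] Uf_ultra) => // h'.
by apply: filterS h' => n /= /negP /negbTE.
Qed.

Lemma findep_cover (F : nat -> set Xc) (B : set Xc) :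
  findep B -> (forall k, findep (F k)) -> B `<=` \bigcup_k F k ->
  exists n, B `<=` \big[setU/set0]_(k < n) F k.
Proof.
move=> [NB hB] hF BF; apply: contrapT => /forallNP H.
have H' : forall n, exists x, B x /\ ~ (\big[setU/set0]_(k < n) F k) x.
  move=> n; have := H n; move/nonsubset => [x [Bx nx]]; by exists x.
have [xs hxs] := choice H'.
pose z : Xc := fun i => `[< Uf [set n | xs n i] >].
have W := window_Uf (Uf_pointwise xs).
have Bz : B z.
  have [n hn] := filter_ex (W NB).
  by apply: (hB (xs n)) => //; case: (hxs n).
have [k _ Fkz] := BF z Bz.
have [Nk hk] := hF k.
have [n [hn kn]] := filter_ex (filterI (W Nk) (Uf_oo (nbhs_infty_gt k))).
case: (hxs n) => _; apply.
rewrite -bigcup_mkord; exists (Ordinal kn) => //=.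
apply: (hk z) => //; exact: agree_sym.
Qed.

Lemma findep0 : findep set0.
Proof. by exists 0%N. Qed.

Lemma findepU : setU_closed findep.
Proof.
move=> A B [NA hA] [NB hB]; exists (maxn NA NB) => x x' ag [Ax|Bx].
  by left; apply: (hA x) => //; apply: agree_le ag; exact: leq_maxl.
by right; apply: (hB x) => //; apply: agree_le ag; exact: leq_maxr.
Qed.

Lemma findepC : setC_closed findep.
Proof.
move=> A [N hA]; exists N => x x' ag nAx Ax'; apply: nAx.
by apply: (hA x') => //; exact: agree_sym.
Qed.

Definition Xd : measure_display := default_measure_display.
HB.instance Definition _ := @isAlgebraOfSets.Build Xd Xc findep findep0 findepU findepC.

Lemma measurableXcE : (Xd.-measurable : set (set Xc)) = findep.
Proof. by []. Qed.

Definition orb (y : int -> bool) (j : int) : Xc := fun i => y (i + j).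
Definition Lm Mw y (B : set Xc) : RR := lam Mw [set j | B (orb y j)].
Definition mu Mw y (B : set Xc) : \bar RR := (Lm Mw y B)%:E.

Section MuProps.
Variables (Mw : nat -> int) (y : int -> bool).

Lemma mu0 : mu Mw y set0 = 0%E.
Proof.
rewrite /mu /Lm; have -> : [set j | (set0 : set Xc) (orb y j)] = set0 by [].
by rewrite lam0.
Qed.

Lemma mu_ge0 B : (0 <= mu Mw y B)%E.
Proof. by rewrite /mu lee_fin lam_ge0. Qed.

Lemma Lm_bigU (F : nat -> set Xc) n : trivIset setT F ->
  Lm Mw y (\big[setU/set0]_(k < n) F k) = \sum_(k < n) Lm Mw y (F k).
Proof.
move=> tF; rewrite /Lm.
have -> : [set j | (\big[setU/set0]_(k < n) F k) (orb y j)] =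
   \big[setU/set0]_(k < n) [set j | F k (orb y j)].
  rewrite -(bigcup_mkord n (fun k => [set j | F k (orb y j)])) -bigcup_mkord.
  by apply/seteqP; split => j [k hk h]; exists k.
apply: (@lam_bigU Mw (fun k => [set j | F k (orb y j)]) n) => i j ji; apply/seteqP; split => // x [h1 h2].
have : i = j by apply: tF => //; exists (orb y x).
by move=> eij; move: ji; rewrite eij ltnn.
Qed.

Lemma mu_sigma : semi_sigma_additive (mu Mw y).
Proof.
move=> F mF tF mUF.
have [n0 h0] := findep_cover mUF mF (@subset_refl _ _).
have Fe : forall k, (n0 <= k)%N -> F k = set0.
  move=> k hk; apply/seteqP; split => // x Fkx.
  have : (\bigcup_k F k) x by exists k.
  move/h0; rewrite -bigcup_mkord => -[k' /= hk' Fk'x].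
  have ekk : k = k' by apply: tF => //; exists x.
  by move: hk; rewrite ekk leqNgt hk'.
have UE : \bigcup_k F k = \big[setU/set0]_(k < n0) F k.
  apply/seteqP; split => // x; rewrite -bigcup_mkord => -[k _ Fkx]; by exists k.
apply: cvg_near_cst; exists n0 => // n /= hn.
rewrite UE /mu Lm_bigU // -sumEFin.
rewrite (big_cat_nat (n := n0)) //= big_mkord.
rewrite [X in (_ + X)%E]big1_seq ?adde0 // => i /andP [_].
rewrite mem_index_iota => /andP [hi _]; rewrite Fe //.
by have := mu0; rewrite /mu => ->.
Qed.

End MuProps.

HB.instance Definition _ Mw y := isMeasure.Build _ Xc RR (mu Mw y) (mu0 Mw y) (@mu_ge0 Mw y) (@mu_sigma Mw y).

Definition Ix := g_sigma_algebraType (Xd.-measurable : set (set Xc)).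

Definition shc (c : int) (x : Xc) : Xc := fun i => x (i + c).

Lemma findep_shift (c : int) B : findep B -> findep [set x | B (shc c x)].
Proof.
move=> [N hB]; exists (N + `|c|)%N => x x' ag /=; apply: hB => i hi.
by rewrite /shc ag //; lia.
Qed.

Lemma findep_meas (B : set Xc) : findep B -> measurable (B : set Ix).
Proof. by move=> h; apply: sub_gen_smallest. Qed.

Definition Tsh (x : Ix) : Ix := shc 1 x.
Definition Tinv (x : Ix) : Ix := shc (-1) x.

Lemma Tsh_meas : measurable_fun [set: Ix] Tsh.
Proof.
apply: (measurability (Xd.-measurable : set (set Ix))) => //.
move=> _ [B hB <-]; rewrite setTI; apply: findep_meas.
exact: findep_shift.
Qed.

Lemma Tinv_meas : measurable_fun [set: Ix] Tinv.
Proof.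
apply: (measurability (Xd.-measurable : set (set Ix))) => //.
move=> _ [B hB <-]; rewrite setTI; apply: findep_meas.
exact: findep_shift.
Qed.

Lemma TshK : cancel Tsh Tinv.
Proof. by move=> x; apply: funext => i; rewrite /Tinv /Tsh /shc addrNK. Qed.

Lemma TinvK : cancel Tinv Tsh.
Proof. by move=> x; apply: funext => i; rewrite /Tinv /Tsh /shc addrK. Qed.

Lemma iter_intE (k : int) (x : Ix) : iter_int Tsh Tinv k x = shc k x.
Proof.
case: k => n /=.
  elim: n => [|n IH] /=; first by apply: funext => i; rewrite /shc addr0.
  rewrite IH; apply: funext => i; rewrite /Tsh /shc.
  by congr x; rewrite -addn1 PoszD; ring.
rewrite NegzE; elim: n => [|n IH] /=; first by [].
rewrite IH; apply: funext => i; rewrite /Tinv /shc.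
congr x; rewrite -[n.+2]addn1 PoszD; ring.
Qed.

Section Ext.
Variables (Mw : nat -> int) (y : int -> bool).

Local Notation P := (measure_extension (mu Mw y)).

Lemma PE (B : set Xc) : findep B -> P B = mu Mw y B.
Proof. by move=> hB; rewrite /measure_extension measurable_mu_extE. Qed.

Lemma findepT : findep (setT : set Xc).
Proof. by exists 0%N. Qed.

Lemma P_T : P setT = 1%E.
Proof.
rewrite (PE findepT) /mu /Lm.
by have -> : [set j | (setT : set Xc) (orb y j)] = setT by []; rewrite lamT.
Qed.

Definition Pinv (A : set Ix) : \bar RR := P (Tsh @^-1` A).

Let Pinv0 : Pinv set0 = 0%E.
Proof. by rewrite /Pinv preimage_set0 measure0. Qed.

Let Pinv_ge0 A : (0 <= Pinv A)%E.
Proof. exact: measure_ge0. Qed.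

Let Pinv_sigma : semi_sigma_additive Pinv.
Proof.
move=> F mF tF mUF; rewrite /Pinv preimage_bigcup.
apply: measure_semi_sigma_additive.
- by move=> n; rewrite -[X in measurable X]setTI; exact: Tsh_meas.
- apply/trivIsetP => /= i j _ _ ij; rewrite -preimage_setI.
  by move/trivIsetP : tF => /(_ _ _ _ _ ij) ->//; rewrite preimage_set0.
- by rewrite -preimage_bigcup -[X in measurable X]setTI; exact: Tsh_meas.
Qed.

HB.instance Definition _ := isMeasure.Build _ _ _ Pinv Pinv0 Pinv_ge0 Pinv_sigma.

Lemma P_inv (A : set Ix) : measurable A -> P (Tsh @^-1` A) = P A.
Proof.
move=> mA.
have sf : sigma_finite [set: Xc] (mu Mw y).
  apply: fin_num_fun_sigma_finite; first by rewrite mu0.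
  by move=> B _; rewrite /mu.
have := @measure_extension_unique _ _ _ (mu Mw y) sf Pinv.
move=> h; rewrite -/(Pinv A) (h _ _ mA) //.
move=> B mB; rewrite /Pinv /=; apply/esym.
apply: (@eq_trans _ _ (mu Mw y [set x | B (shc 1 x)])).
  by apply: PE; exact: findep_shift.
rewrite /mu /Lm; congr (_%:E).
rewrite -(lam_shift1 Mw [set j | B (orb y j)]); congr lam.
by apply: funext => j /=; congr B; apply: funext => i; rewrite /orb /shc; congr y; ring.
Qed.

End Ext.

HB.instance Definition _ Mw y := Measure_isProbability.Build _ _ _ (measure_extension (mu Mw y)) (P_T Mw y).

Lemma mps_sys Mw y : mps (measure_extension (mu Mw y) : probability Ix RR) Tsh Tinv.
Proof.
split; [exact: Tsh_meas|exact: Tinv_meas|exact: TshK|exact: TinvK|].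
move=> A mA; exact: P_inv.
Qed.

Lemma image_shc (k : int) (E : set Xc) :
  (iter_int Tsh Tinv k @` (E : set Ix)) = [set x : Xc | E (shc (- k) x)].
Proof.
apply/seteqP; split => x /=.
  move=> [x0 Ex0 <-]; rewrite iter_intE.
  have -> : shc (- k) (shc k x0) = x0.
    by apply: funext => i; rewrite /shc addrNK.
  by [].
move=> Ex; exists (shc (- k) x) => //.
by rewrite iter_intE; apply: funext => i; rewrite /shc addrK.
Qed.

Lemma findepI (A B : set Xc) : findep A -> findep B -> findep (A `&` B).
Proof.
move=> [NA hA] [NB hB]; exists (maxn NA NB) => x x' ag [Ax Bx]; split.
  by apply: (hA x) => //; apply: agree_le ag; exact: leq_maxl.
by apply: (hB x) => //; apply: agree_le ag; exact: leq_maxr.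
Qed.

Lemma lam_pos_ex Mw (B : set int) : 0 < lam Mw B -> exists j, B j.
Proof.
move=> h; apply: contrapT => /forallNP H.
have : B = set0 by apply/seteqP; split => // j /H.
by move=> eB; move: h; rewrite eB lam0 ltxx.
Qed.

Lemma recurrence_lam (R' : set int) Mw (C : set int) (t : int) :
  set_of_recurrence R' -> 0 < lam Mw [set j | C j /\ C (j - t)] ->
  exists2 k, R' k & exists j, [/\ C j, C (j - t), C (j - k) & C (j - k - t)].
Proof.
move=> rec pos.
pose y : int -> bool := fun i => `[< C i >].
pose E : set Xc := [set x | x 0 /\ x (- t)].
have hE : findep E.
  exists `|t|%N => x x' ag [h1 h2]; split; rewrite -ag //; lia.
have Epos : (0 < measure_extension (mu Mw y) (E : set Ix))%E.
  rewrite (PE _ _ hE) /mu /Lm lte_fin.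
  have -> : [set j | E (orb y j)] = [set j | C j /\ C (j - t)].
    apply/seteqP; split => j; rewrite /E /orb /y /= add0r addrC => -[h1 h2]; split;
      by move: h1 h2 => /asboolP ? /asboolP ? || by apply/asboolP.
  exact: pos.
have [k Rk hk] := rec _ Ix (measure_extension (mu Mw y)) Tsh Tinv (mps_sys Mw y) E (findep_meas hE) Epos.
exists k => //.
rewrite image_shc in hk.
pose E' : set Xc := E `&` [set x : Xc | E (shc (- k) x)].
have hE' : findep E' by apply: findepI => //; exact: findep_shift.
have : (0 < measure_extension (mu Mw y) (E' : set Ix))%E by [].
rewrite (PE _ _ hE') /mu /Lm lte_fin => /lam_pos_ex [j [[h1 h2] [h3 h4]]].
have yC : forall a b : int, a = b -> y a -> C b by move=> a b -> /asboolP.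
exists j; split.
- by apply: (yC _ _ _ h1); rewrite /orb; ring.
- by apply: (yC _ _ _ h2); rewrite /orb; ring.
- by apply: (yC _ _ _ h3); rewrite /orb /shc; ring.
- by apply: (yC _ _ _ h4); rewrite /orb /shc; ring.
Qed.

Lemma window_sup (A : set int) (N : nat) (c : RR) : c < banach_window A N ->
  exists M : int, c < (\sum_(i < N) (\1_A (M + (i : nat)%:Z) : RR)) / N%:R.
Proof.
move=> hc.
set E := [set (\sum_(i < N) (\1_A (M + (i : nat)%:Z) : RR)) / N%:R | M in [set: int]].
have hs : has_sup E.
  split; first by exists ((\sum_(i < N) (\1_A (0 + (i : nat)%:Z) : RR)) / N%:R); exists 0.
  exists 1 => _ [M _ <-].
  case: N {hc E} => [|N]; first by rewrite big_ord0 mul0r ler01.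
  have := sum_indic_le A M N.+1 => /andP [h0 h1].
  by rewrite ler_pdivrMr ?ltr0Sn // mul1r.
have eps0 : 0 < banach_window A N - c by rewrite subr_gt0.
have [e [M _ <-] he] := sup_adherent eps0 hs.
by exists M; move: he; rewrite /banach_window -/E; lra.
Qed.

Lemma windows (A : set int) : 0 < upper_banach_density A ->
  exists (d : RR) (Mw : nat -> int), 0 < d /\ d <= lam Mw A.
Proof.
rewrite /upper_banach_density => hpos.
case: (pselect (exists l : RR, banach_window A @ \oo --> l)) => [[l fl]|nocv]; last first.
  exfalso; move: hpos.
  have -> : lim (banach_window A @ \oo) = 0.
    rewrite /lim /lim_in getPN //.
    by move=> l hl; apply: nocv; exists l.
  by rewrite ltxx.
have el : lim (banach_window A @ \oo) = l.
  have fl' : banach_window A @ \oo --> lim (banach_window A @ \oo) := cvgP _ fl.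
  exact: (@cvg_unique _ (@Rhausdorff RR) _ (fmap_proper_filter _ eventually_filter) _ _ fl' fl).
rewrite el in hpos.
have l2 : l / 2 < l by lra.
have [N0 _ hN0] := cvgr_gt l fl (l / 2) l2.
have : forall N : nat, exists M : int, (N0 <= N)%N ->
    l / 2 < (\sum_(i < N) (\1_A (M + (i : nat)%:Z) : RR)) / N%:R.
  move=> N; case: (leqP N0 N) => hN.
    by have [M hM] := window_sup (hN0 N hN); exists M.
  by exists 0 => h; exfalso; lia.
move=> /choice [Mw hMw].
exists (l / 2), Mw; split; first lra.
apply: ulim_ge; first exact: avg01.
apply: Uf_oo; exists N0 => // N /= hN.
by apply/ltW; exact: hMw.
Qed.

Lemma dvdzB' (d a b : int) : (d %| a)%Z -> (d %| b)%Z -> (d %| a - b)%Z.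
Proof.
move=> /dvdzP [c1 ->] /dvdzP [c2 ->]; apply/dvdzP; exists (c1 - c2); ring.
Qed.

Lemma dvd_small (q : nat) (x : int) : (q%:Z %| x)%Z -> (`|x| < q)%N -> x = 0.
Proof.
move=> /dvdzP [c ->]; rewrite abszM absz_nat => h.
case: (eqVneq c 0) => [->|c0]; first by rewrite mul0r.
exfalso; have cp : (0 < `|c|)%N by rewrite absz_gt0.
by move: h; rewrite ltnNge leq_pmull.
Qed.

Lemma res_lemma (q : nat) (r t j : int) : (2 * `|t| < q)%N -> t != 0 ->
  ((q%:Z %| j - r)%Z \/ (q%:Z %| j - r + t)%Z) ->
  ((q%:Z %| j - t - r)%Z \/ (q%:Z %| j - t - r + t)%Z) -> (q%:Z %| j - r)%Z.
Proof.
move=> hq t0 [//|h1] [h2|h2].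
  exfalso; have := dvdzB' h1 h2.
  have -> : j - r + t - (j - t - r) = 2 * t by ring.
  move=> /dvd_small h; have : (2 * t = 0) by apply: h; lia.
  by move=> /eqP; rewrite mulf_eq0 (negbTE t0) orbF.
by have <- : j - t - r + t = j - r by ring.
Qed.

Theorem lemma8p2 (S : set int) :
  (forall m : int, set_of_recurrence (translate S m)) ->
  forall (A : set int) (n : int),
    0 < upper_banach_density A ->
    infinite_set (S `&` shifted_diff n A).
Proof.
move=> hS A n hA fin.
have [d [Mw [d0 dA]]] := windows hA.
have lamA : 0 < lam Mw A by apply: lt_le_trans dA.
have [X eX] := finite_fsetP.1 fin.
pose Bd := \max_(s <- finmap.enum_fset X) `|s|%N.
have hBd : forall s, S s -> shifted_diff n A s -> (`|s| <= Bd)%N.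
  move=> s Ss Ds.
  have sX : s \in finmap.enum_fset X.
    have : (S `&` shifted_diff n A) s by [].
    by rewrite eX.
  exact: (@leq_bigmax_seq _ _ predT (fun s : int => `|s|%N) s sX).
have [t [ht tpos]] := lam_recur (Bd + `|n|) lamA.
have t0 : t != 0 by apply/eqP => t0; move: ht; rewrite t0; lia.
case: (pselect (S (n + t))) => Snt.
  exfalso; have [j [Aj Ajt]] := lam_pos_ex tpos.
  have : shifted_diff n A (n + t).
    by exists j => //; exists (j - t) => //; ring.
  move=> /(hBd _ Snt); lia.
pose q : nat := (2 * (`|t| + Bd + `|n|)).+1.
have q0 : (0 < q)%N by [].
have [r [rq rpos]] := lam_residue q0 tpos.
pose C := [set j : int | A j /\ ((q%:Z %| j - r%:Z)%Z \/ (q%:Z %| j - r%:Z + t)%Z)].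
have Cpos : 0 < lam Mw [set j | C j /\ C (j - t)].
  apply: lt_le_trans rpos _; apply: lam_le => j [[Aj Ajt] jr].
  have hj : (q%:Z %| j - r%:Z)%Z.
    rewrite {1}(divz_eq j q) jr addrK; exact: dvdz_mull (dvdzz _).
  split; split => //; [by left|right].
  by have -> : j - t - r%:Z + t = j - r%:Z by ring.
have [k Rk [j [Cj Cjt Cjk Cjkt]]] := recurrence_lam (hS (- n - t)) Cpos.
move: Rk => [s Ss sk].
have hq2 : (2 * `|t| < q)%N by rewrite /q; lia.
have dj := res_lemma hq2 t0 Cj.2 Cjt.2.
have djk : (q%:Z %| j - k - r%:Z)%Z.
  exact: (res_lemma hq2 t0 Cjk.2 Cjkt.2).
have dk : (q%:Z %| k)%Z.
  have := dvdzB' dj djk.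
  by have -> : j - r%:Z - (j - k - r%:Z) = k by ring.
have Fs : shifted_diff n A s.
  exists j; first exact: Cj.1.
  exists (j - k - t); first exact: Cjkt.1.
  by rewrite -sk; ring.
have sB := hBd s Ss Fs.
have k0 : k != 0.
  apply/eqP => k0; apply: Snt.
  by have -> : n + t = s by move: sk; rewrite k0 => h; lia.
have qk : (q <= `|k|)%N.
  rewrite leqNgt; apply/negP => /(dvd_small dk) hk.
  by move: k0; rewrite hk eqxx.
move: qk sB; rewrite /q -sk; lia.
Qed.
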